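(* Let $\Sigma$ be the set of all groupoid identities (in one binary operation, written as juxtaposition) that are satisfied by each of the four binary operations $x+y$, $x-y$, $-x+y$, $-x-y$ in every abelian group. Then the following six identities form an independent basis for $\Sigma$ (that is, every identity in $\Sigma$ is a consequence of them, they all lie in $\Sigma$, and none of them is a consequence of the other five): (M1) $(xy)(zt)=(xz)(yt)$; (M2) $(xy)(zt)=(ty)(zx)$; (M3) $((xy)z)t=((xt)z)y$; (M4) $(x(yz))t=(x(tz))y$; (M5) $x((yz)t)=z((yx)t)$; (M6) $x(y(zt))=z(y(xt))$.
   Context: A basis for a set of identities $\Sigma$ is a set of identities whose equational consequences are exactly $\Sigma$. *)

(* Defs.v *)
From HB Require Import structures.
From mathcomp Require Import all_boot all_algebra.
Set Implicit Arguments.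
Unset Strict Implicit.
Unset Printing Implicit Defensive.
Import GRing.Theory.
Local Open Scope ring_scope.

Inductive term : Type :=
| Var : nat -> term
| Op : term -> term -> term.

Definition identity := (term * term)%type.

Fixpoint eval (T : Type) (op : T -> T -> T) (v : nat -> T) (t : term) : T :=
  match t with
  | Var n => v n
  | Op t1 t2 => op (eval op v t1) (eval op v t2)
  end.

Definition satisfies (T : Type) (op : T -> T -> T) (e : identity) : Prop :=
  forall v : nat -> T, eval op v e.1 = eval op v e.2.

Fixpoint subst (s : nat -> term) (t : term) : term :=
  match t with
  | Var n => s n
  | Op t1 t2 => Op (subst s t1) (subst s t2)
  end.

(* equational consequence: the least fully invariant congruence on terms
   containing E (Birkhoff's rules of equational logic) *)
Inductive derivable (E : identity -> Prop) : term -> term -> Prop :=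
| der_ax : forall e, E e -> forall s, derivable E (subst s e.1) (subst s e.2)
| der_refl : forall t, derivable E t t
| der_sym : forall t u, derivable E t u -> derivable E u t
| der_trans : forall t u w, derivable E t u -> derivable E u w -> derivable E t w
| der_op : forall t1 t2 u1 u2, derivable E t1 u1 -> derivable E t2 u2 ->
    derivable E (Op t1 t2) (Op u1 u2).

Definition consequence (E : identity -> Prop) (e : identity) : Prop :=
  derivable E e.1 e.2.

Definition Sigma (e : identity) : Prop :=
  forall G : zmodType,
    [/\ satisfies (fun x y : G => x + y) e,
        satisfies (fun x y : G => x - y) e,
        satisfies (fun x y : G => - x + y) e &
        satisfies (fun x y : G => - x - y) e].

Definition vx := Var 0.
Definition vy := Var 1.
Definition vz := Var 2.
Definition vt := Var 3.

Definition M1 : identity := (Op (Op vx vy) (Op vz vt), Op (Op vx vz) (Op vy vt)).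
Definition M2 : identity := (Op (Op vx vy) (Op vz vt), Op (Op vt vy) (Op vz vx)).
Definition M3 : identity := (Op (Op (Op vx vy) vz) vt, Op (Op (Op vx vt) vz) vy).
Definition M4 : identity := (Op (Op vx (Op vy vz)) vt, Op (Op vx (Op vt vz)) vy).
Definition M5 : identity := (Op vx (Op (Op vy vz) vt), Op vz (Op (Op vy vx) vt)).
Definition M6 : identity := (Op vx (Op vy (Op vz vt)), Op vz (Op vy (Op vx vt))).

Definition Mfam (i : 'I_6) : identity :=
  match val i with
  | 0 => M1 | 1 => M2 | 2 => M3 | 3 => M4 | 4 => M5 | _ => M6
  end.

Definition Mset (e : identity) : Prop := exists i : 'I_6, e = Mfam i.

(* the set {M1,...,M6} minus M_(i+1) *)
Definition Mset_but (i : 'I_6) (e : identity) : Prop :=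
  exists j : 'I_6, j != i /\ e = Mfam j.

Definition basis_for (B Sig : identity -> Prop) : Prop :=
  forall e, consequence B e <-> Sig e.

(* Main.v *)
Require Import Defs.
From mathcomp Require Import all_boot all_algebra zify.
From Stdlib Require Import Classical.
From Stdlib Require Bool PeanoNat.
Set Implicit Arguments.
Unset Strict Implicit.

Notation der := (derivable Mset).

Lemma Mset_i (i : nat) (Hi : (i < 6)%N) : Mset (Mfam (Ordinal Hi)).
Proof. exists (Ordinal Hi). reflexivity. Qed.

Definition sb4 (x y z t : term) : nat -> term :=
  fun n => match n with 0 => x | 1 => y | 2 => z | _ => t end.

Lemma M1s x y z t : der (Op (Op x y) (Op z t)) (Op (Op x z) (Op y t)).
Proof. exact (der_ax (@Mset_i 0 isT) (sb4 x y z t)). Qed.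
Lemma M2s x y z t : der (Op (Op x y) (Op z t)) (Op (Op t y) (Op z x)).
Proof. exact (der_ax (@Mset_i 1 isT) (sb4 x y z t)). Qed.
Lemma M3s x y z t : der (Op (Op (Op x y) z) t) (Op (Op (Op x t) z) y).
Proof. exact (der_ax (@Mset_i 2 isT) (sb4 x y z t)). Qed.
Lemma M4s x y z t : der (Op (Op x (Op y z)) t) (Op (Op x (Op t z)) y).
Proof. exact (der_ax (@Mset_i 3 isT) (sb4 x y z t)). Qed.
Lemma M5s x y z t : der (Op x (Op (Op y z) t)) (Op z (Op (Op y x) t)).
Proof. exact (der_ax (@Mset_i 4 isT) (sb4 x y z t)). Qed.
Lemma M6s x y z t : der (Op x (Op y (Op z t))) (Op z (Op y (Op x t))).
Proof. exact (der_ax (@Mset_i 5 isT) (sb4 x y z t)). Qed.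

Inductive ctx : Type := Hole | CL (c : ctx) (r : term) | CR (l : term) (c : ctx).
Fixpoint plug (c : ctx) (u : term) : term :=
  match c with Hole => u | CL c r => Op (plug c u) r | CR l c => Op l (plug c u) end.
Definition cxor (a b : bool * bool) : bool * bool := (xorb a.1 b.1, xorb a.2 b.2).
Definition cL : bool * bool := (true, false).
Definition cR : bool * bool := (false, true).
Definition c0 : bool * bool := (false, false).
Fixpoint ccls (c : ctx) : bool * bool :=
  match c with Hole => c0 | CL c _ => cxor cL (ccls c) | CR _ c => cxor cR (ccls c) end.
Fixpoint clen (c : ctx) : nat :=
  match c with Hole => 0 | CL c _ => (clen c).+1 | CR _ c => (clen c).+1 end.
Definition cond (C1 C2 : ctx) := cxor cL (ccls C1) = cxor cR (ccls C2).
Definition SWst (C1 C2 : ctx) :=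
  forall X Z, der (Op (plug C1 X) (plug C2 Z)) (Op (plug C1 Z) (plug C2 X)).

Ltac clsolve := unfold cond; simpl ccls;
  repeat match goal with |- context [ccls ?t] => destruct (ccls t) as [[|] [|]] end;
  cbv [cxor cL cR c0 fst snd xorb]; try congruence; try discriminate; intros; discriminate.
Lemma SWc_1 
  (IH : forall D1 D2, clen D1 + clen D2 < clen Hole + clen Hole -> cond D1 D2 -> SWst D1 D2)
  (Hc : cond Hole Hole) : SWst Hole Hole.
Proof. exfalso; revert Hc; clsolve. Qed.

Lemma SWc_2 (b0 : term)
  (IH : forall D1 D2, clen D1 + clen D2 < clen Hole + clen (CL Hole b0) -> cond D1 D2 -> SWst D1 D2)
  (Hc : cond Hole (CL Hole b0)) : SWst Hole (CL Hole b0).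
Proof. exfalso; revert Hc; clsolve. Qed.

Lemma SWc_3 (b0 : term)
  (IH : forall D1 D2, clen D1 + clen D2 < clen Hole + clen (CR b0 Hole) -> cond D1 D2 -> SWst D1 D2)
  (Hc : cond Hole (CR b0 Hole)) : SWst Hole (CR b0 Hole).
Proof. exfalso; revert Hc; clsolve. Qed.

Lemma SWc_4 (b0 b1 : term) (c2 : ctx)
  (IH : forall D1 D2, clen D1 + clen D2 < clen Hole + clen (CL (CL c2 b1) b0) -> cond D1 D2 -> SWst D1 D2)
  (Hc : cond Hole (CL (CL c2 b1) b0)) : SWst Hole (CL (CL c2 b1) b0).
Proof.
intros X Z; cbn [plug].
eapply der_trans; [ apply M5s | ].
eapply der_trans; [ eapply der_op; [ apply der_refl | eapply der_op; [ apply (IH c2 Hole); [ simpl; lia | revert Hc; clsolve ] | apply der_refl ] ] | ].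
cbn [plug].
eapply der_trans; [ apply M5s | ].
apply der_refl.
Qed.

Lemma SWc_6 (b0 b1 : term)
  (IH : forall D1 D2, clen D1 + clen D2 < clen Hole + clen (CL (CR b1 Hole) b0) -> cond D1 D2 -> SWst D1 D2)
  (Hc : cond Hole (CL (CR b1 Hole) b0)) : SWst Hole (CL (CR b1 Hole) b0).
Proof.
intros X Z; cbn [plug].
eapply der_trans; [ apply M5s | ].
apply der_refl.
Qed.

Lemma SWc_7 (b0 b1 b2 : term) (c2 : ctx)
  (IH : forall D1 D2, clen D1 + clen D2 < clen Hole + clen (CL (CR b1 (CL c2 b2)) b0) -> cond D1 D2 -> SWst D1 D2)
  (Hc : cond Hole (CL (CR b1 (CL c2 b2)) b0)) : SWst Hole (CL (CR b1 (CL c2 b2)) b0).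
Proof.
intros X Z; cbn [plug].
eapply der_trans; [ eapply der_op; [ apply der_refl | apply M4s ] | ].
eapply der_trans; [ apply (IH Hole (CR (Op b1 (Op b0 b2)) c2)); [ simpl; lia | revert Hc; clsolve ] | ].
cbn [plug].
eapply der_trans; [ eapply der_op; [ apply der_refl | apply M4s ] | ].
apply der_refl.
Qed.

Lemma SWc_8 (b0 b1 b2 : term) (c2 : ctx)
  (IH : forall D1 D2, clen D1 + clen D2 < clen Hole + clen (CL (CR b1 (CR b2 c2)) b0) -> cond D1 D2 -> SWst D1 D2)
  (Hc : cond Hole (CL (CR b1 (CR b2 c2)) b0)) : SWst Hole (CL (CR b1 (CR b2 c2)) b0).
Proof.
intros X Z; cbn [plug].
eapply der_trans; [ apply M5s | ].
eapply der_trans; [ apply M1s | ].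
eapply der_trans; [ apply M4s | ].
eapply der_trans; [ eapply der_op; [ eapply der_op; [ apply der_refl | apply (IH (CL c2 b0) Hole); [ simpl; lia | revert Hc; clsolve ] ] | apply der_refl ] | ].
cbn [plug].
eapply der_trans; [ apply M4s | ].
eapply der_trans; [ apply M1s | ].
eapply der_trans; [ apply M5s | ].
apply der_refl.
Qed.

Lemma SWc_10 (b0 b1 : term)
  (IH : forall D1 D2, clen D1 + clen D2 < clen Hole + clen (CR b0 (CL Hole b1)) -> cond D1 D2 -> SWst D1 D2)
  (Hc : cond Hole (CR b0 (CL Hole b1))) : SWst Hole (CR b0 (CL Hole b1)).
Proof.
intros X Z; cbn [plug].
eapply der_trans; [ apply M6s | ].
apply der_refl.
Qed.

Lemma SWc_11 (b0 b1 b2 : term) (c2 : ctx)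
  (IH : forall D1 D2, clen D1 + clen D2 < clen Hole + clen (CR b0 (CL (CL c2 b2) b1)) -> cond D1 D2 -> SWst D1 D2)
  (Hc : cond Hole (CR b0 (CL (CL c2 b2) b1))) : SWst Hole (CR b0 (CL (CL c2 b2) b1)).
Proof.
intros X Z; cbn [plug].
eapply der_trans; [ apply M6s | ].
eapply der_trans; [ apply M2s | ].
eapply der_trans; [ apply M3s | ].
eapply der_trans; [ eapply der_op; [ eapply der_op; [ apply (IH Hole (CR b0 c2)); [ simpl; lia | revert Hc; clsolve ] | apply der_refl ] | apply der_refl ] | ].
cbn [plug].
eapply der_trans; [ apply M3s | ].
eapply der_trans; [ apply M2s | ].
eapply der_trans; [ apply M6s | ].
apply der_refl.
Qed.

Lemma SWc_12 (b0 b1 b2 : term) (c2 : ctx)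
  (IH : forall D1 D2, clen D1 + clen D2 < clen Hole + clen (CR b0 (CL (CR b2 c2) b1)) -> cond D1 D2 -> SWst D1 D2)
  (Hc : cond Hole (CR b0 (CL (CR b2 c2) b1))) : SWst Hole (CR b0 (CL (CR b2 c2) b1)).
Proof.
intros X Z; cbn [plug].
eapply der_trans; [ eapply der_op; [ apply der_refl | apply M5s ] | ].
eapply der_trans; [ apply (IH Hole (CL c2 (Op (Op b2 b0) b1))); [ simpl; lia | revert Hc; clsolve ] | ].
cbn [plug].
eapply der_trans; [ eapply der_op; [ apply der_refl | apply M5s ] | ].
apply der_refl.
Qed.

Lemma SWc_13 (b0 b1 : term) (c2 : ctx)
  (IH : forall D1 D2, clen D1 + clen D2 < clen Hole + clen (CR b0 (CR b1 c2)) -> cond D1 D2 -> SWst D1 D2)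
  (Hc : cond Hole (CR b0 (CR b1 c2))) : SWst Hole (CR b0 (CR b1 c2)).
Proof.
intros X Z; cbn [plug].
eapply der_trans; [ apply M6s | ].
eapply der_trans; [ eapply der_op; [ apply der_refl | eapply der_op; [ apply der_refl | apply (IH Hole c2); [ simpl; lia | revert Hc; clsolve ] ] ] | ].
cbn [plug].
eapply der_trans; [ apply M6s | ].
apply der_refl.
Qed.

Lemma SWc_14 (a0 : term)
  (IH : forall D1 D2, clen D1 + clen D2 < clen (CL Hole a0) + clen Hole -> cond D1 D2 -> SWst D1 D2)
  (Hc : cond (CL Hole a0) Hole) : SWst (CL Hole a0) Hole.
Proof. exfalso; revert Hc; clsolve. Qed.

Lemma SWc_15 (a0 b0 : term)
  (IH : forall D1 D2, clen D1 + clen D2 < clen (CL Hole a0) + clen (CL Hole b0) -> cond D1 D2 -> SWst D1 D2)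
  (Hc : cond (CL Hole a0) (CL Hole b0)) : SWst (CL Hole a0) (CL Hole b0).
Proof. exfalso; revert Hc; clsolve. Qed.

Lemma SWc_16 (a0 b0 : term)
  (IH : forall D1 D2, clen D1 + clen D2 < clen (CL Hole a0) + clen (CR b0 Hole) -> cond D1 D2 -> SWst D1 D2)
  (Hc : cond (CL Hole a0) (CR b0 Hole)) : SWst (CL Hole a0) (CR b0 Hole).
Proof.
intros X Z; cbn [plug].
eapply der_trans; [ apply M2s | ].
apply der_refl.
Qed.

Lemma SWc_17 (a0 b0 b1 : term) (c2 : ctx)
  (IH : forall D1 D2, clen D1 + clen D2 < clen (CL Hole a0) + clen (CL (CL c2 b1) b0) -> cond D1 D2 -> SWst D1 D2)
  (Hc : cond (CL Hole a0) (CL (CL c2 b1) b0)) : SWst (CL Hole a0) (CL (CL c2 b1) b0).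
Proof.
intros X Z; cbn [plug].
eapply der_trans; [ apply M1s | ].
eapply der_trans; [ eapply der_op; [ apply (IH Hole (CL c2 b1)); [ simpl; lia | revert Hc; clsolve ] | apply der_refl ] | ].
cbn [plug].
eapply der_trans; [ apply M1s | ].
apply der_refl.
Qed.

Lemma SWc_18 (a0 b0 b1 : term) (c2 : ctx)
  (IH : forall D1 D2, clen D1 + clen D2 < clen (CL Hole a0) + clen (CL (CR b1 c2) b0) -> cond D1 D2 -> SWst D1 D2)
  (Hc : cond (CL Hole a0) (CL (CR b1 c2) b0)) : SWst (CL Hole a0) (CL (CR b1 c2) b0).
Proof.
intros X Z; cbn [plug].
eapply der_trans; [ apply M1s | ].
eapply der_trans; [ eapply der_op; [ apply (IH Hole (CR b1 c2)); [ simpl; lia | revert Hc; clsolve ] | apply der_refl ] | ].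
cbn [plug].
eapply der_trans; [ apply M1s | ].
apply der_refl.
Qed.

Lemma SWc_19 (a0 b0 b1 : term) (c2 : ctx)
  (IH : forall D1 D2, clen D1 + clen D2 < clen (CL Hole a0) + clen (CR b0 (CL c2 b1)) -> cond D1 D2 -> SWst D1 D2)
  (Hc : cond (CL Hole a0) (CR b0 (CL c2 b1))) : SWst (CL Hole a0) (CR b0 (CL c2 b1)).
Proof.
intros X Z; cbn [plug].
eapply der_trans; [ apply M2s | ].
eapply der_trans; [ apply M3s | ].
eapply der_trans; [ eapply der_op; [ eapply der_op; [ apply (IH c2 (CR b0 Hole)); [ simpl; lia | revert Hc; clsolve ] | apply der_refl ] | apply der_refl ] | ].
cbn [plug].
eapply der_trans; [ apply M3s | ].
eapply der_trans; [ apply M2s | ].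
apply der_refl.
Qed.

Lemma SWc_20 (a0 b0 b1 : term) (c2 : ctx)
  (IH : forall D1 D2, clen D1 + clen D2 < clen (CL Hole a0) + clen (CR b0 (CR b1 c2)) -> cond D1 D2 -> SWst D1 D2)
  (Hc : cond (CL Hole a0) (CR b0 (CR b1 c2))) : SWst (CL Hole a0) (CR b0 (CR b1 c2)).
Proof.
intros X Z; cbn [plug].
eapply der_trans; [ apply M6s | ].
eapply der_trans; [ eapply der_op; [ apply der_refl | eapply der_op; [ apply der_refl | apply (IH (CL Hole a0) c2); [ simpl; lia | revert Hc; clsolve ] ] ] | ].
cbn [plug].
eapply der_trans; [ apply M6s | ].
apply der_refl.
Qed.

Lemma SWc_21 (a0 : term)
  (IH : forall D1 D2, clen D1 + clen D2 < clen (CR a0 Hole) + clen Hole -> cond D1 D2 -> SWst D1 D2)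
  (Hc : cond (CR a0 Hole) Hole) : SWst (CR a0 Hole) Hole.
Proof. exfalso; revert Hc; clsolve. Qed.

Lemma SWc_22 (a0 b0 : term)
  (IH : forall D1 D2, clen D1 + clen D2 < clen (CR a0 Hole) + clen (CL Hole b0) -> cond D1 D2 -> SWst D1 D2)
  (Hc : cond (CR a0 Hole) (CL Hole b0)) : SWst (CR a0 Hole) (CL Hole b0).
Proof.
intros X Z; cbn [plug].
eapply der_trans; [ apply M1s | ].
apply der_refl.
Qed.

Lemma SWc_23 (a0 b0 : term)
  (IH : forall D1 D2, clen D1 + clen D2 < clen (CR a0 Hole) + clen (CR b0 Hole) -> cond D1 D2 -> SWst D1 D2)
  (Hc : cond (CR a0 Hole) (CR b0 Hole)) : SWst (CR a0 Hole) (CR b0 Hole).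
Proof. exfalso; revert Hc; clsolve. Qed.

Lemma SWc_24 (a0 b0 b1 : term) (c2 : ctx)
  (IH : forall D1 D2, clen D1 + clen D2 < clen (CR a0 Hole) + clen (CL (CL c2 b1) b0) -> cond D1 D2 -> SWst D1 D2)
  (Hc : cond (CR a0 Hole) (CL (CL c2 b1) b0)) : SWst (CR a0 Hole) (CL (CL c2 b1) b0).
Proof.
intros X Z; cbn [plug].
eapply der_trans; [ apply M5s | ].
eapply der_trans; [ eapply der_op; [ apply der_refl | eapply der_op; [ apply (IH c2 (CR a0 Hole)); [ simpl; lia | revert Hc; clsolve ] | apply der_refl ] ] | ].
cbn [plug].
eapply der_trans; [ apply M5s | ].
apply der_refl.
Qed.

Lemma SWc_25 (a0 b0 b1 : term) (c2 : ctx)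
  (IH : forall D1 D2, clen D1 + clen D2 < clen (CR a0 Hole) + clen (CL (CR b1 c2) b0) -> cond D1 D2 -> SWst D1 D2)
  (Hc : cond (CR a0 Hole) (CL (CR b1 c2) b0)) : SWst (CR a0 Hole) (CL (CR b1 c2) b0).
Proof.
intros X Z; cbn [plug].
eapply der_trans; [ apply M1s | ].
eapply der_trans; [ apply M4s | ].
eapply der_trans; [ eapply der_op; [ eapply der_op; [ apply der_refl | apply (IH (CL Hole b0) c2); [ simpl; lia | revert Hc; clsolve ] ] | apply der_refl ] | ].
cbn [plug].
eapply der_trans; [ apply M4s | ].
eapply der_trans; [ apply M1s | ].
apply der_refl.
Qed.

Lemma SWc_26 (a0 b0 b1 : term) (c2 : ctx)
  (IH : forall D1 D2, clen D1 + clen D2 < clen (CR a0 Hole) + clen (CR b0 (CL c2 b1)) -> cond D1 D2 -> SWst D1 D2)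
  (Hc : cond (CR a0 Hole) (CR b0 (CL c2 b1))) : SWst (CR a0 Hole) (CR b0 (CL c2 b1)).
Proof.
intros X Z; cbn [plug].
eapply der_trans; [ apply M1s | ].
eapply der_trans; [ eapply der_op; [ apply der_refl | apply (IH Hole (CL c2 b1)); [ simpl; lia | revert Hc; clsolve ] ] | ].
cbn [plug].
eapply der_trans; [ apply M1s | ].
apply der_refl.
Qed.

Lemma SWc_27 (a0 b0 b1 : term) (c2 : ctx)
  (IH : forall D1 D2, clen D1 + clen D2 < clen (CR a0 Hole) + clen (CR b0 (CR b1 c2)) -> cond D1 D2 -> SWst D1 D2)
  (Hc : cond (CR a0 Hole) (CR b0 (CR b1 c2))) : SWst (CR a0 Hole) (CR b0 (CR b1 c2)).
Proof.
intros X Z; cbn [plug].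
eapply der_trans; [ apply M1s | ].
eapply der_trans; [ eapply der_op; [ apply der_refl | apply (IH Hole (CR b1 c2)); [ simpl; lia | revert Hc; clsolve ] ] | ].
cbn [plug].
eapply der_trans; [ apply M1s | ].
apply der_refl.
Qed.

Lemma SWc_28 (a0 a1 : term) (c1 : ctx)
  (IH : forall D1 D2, clen D1 + clen D2 < clen (CL (CL c1 a1) a0) + clen Hole -> cond D1 D2 -> SWst D1 D2)
  (Hc : cond (CL (CL c1 a1) a0) Hole) : SWst (CL (CL c1 a1) a0) Hole.
Proof.
intros X Z; cbn [plug].
eapply der_trans; [ apply M3s | ].
eapply der_trans; [ eapply der_op; [ eapply der_op; [ apply (IH c1 Hole); [ simpl; lia | revert Hc; clsolve ] | apply der_refl ] | apply der_refl ] | ].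
cbn [plug].
eapply der_trans; [ apply M3s | ].
apply der_refl.
Qed.

Lemma SWc_29 (a0 a1 b0 : term) (c1 : ctx)
  (IH : forall D1 D2, clen D1 + clen D2 < clen (CL (CL c1 a1) a0) + clen (CL Hole b0) -> cond D1 D2 -> SWst D1 D2)
  (Hc : cond (CL (CL c1 a1) a0) (CL Hole b0)) : SWst (CL (CL c1 a1) a0) (CL Hole b0).
Proof.
intros X Z; cbn [plug].
eapply der_trans; [ apply M1s | ].
eapply der_trans; [ eapply der_op; [ apply (IH (CL c1 a1) Hole); [ simpl; lia | revert Hc; clsolve ] | apply der_refl ] | ].
cbn [plug].
eapply der_trans; [ apply M1s | ].
apply der_refl.
Qed.

Lemma SWc_30 (a0 a1 b0 : term) (c1 : ctx)
  (IH : forall D1 D2, clen D1 + clen D2 < clen (CL (CL c1 a1) a0) + clen (CR b0 Hole) -> cond D1 D2 -> SWst D1 D2)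
  (Hc : cond (CL (CL c1 a1) a0) (CR b0 Hole)) : SWst (CL (CL c1 a1) a0) (CR b0 Hole).
Proof.
intros X Z; cbn [plug].
eapply der_trans; [ apply M3s | ].
eapply der_trans; [ eapply der_op; [ eapply der_op; [ apply (IH c1 (CR b0 Hole)); [ simpl; lia | revert Hc; clsolve ] | apply der_refl ] | apply der_refl ] | ].
cbn [plug].
eapply der_trans; [ apply M3s | ].
apply der_refl.
Qed.

Lemma SWc_31 (a0 a1 b0 b1 : term) (c1 c2 : ctx)
  (IH : forall D1 D2, clen D1 + clen D2 < clen (CL (CL c1 a1) a0) + clen (CL (CL c2 b1) b0) -> cond D1 D2 -> SWst D1 D2)
  (Hc : cond (CL (CL c1 a1) a0) (CL (CL c2 b1) b0)) : SWst (CL (CL c1 a1) a0) (CL (CL c2 b1) b0).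
Proof.
intros X Z; cbn [plug].
eapply der_trans; [ apply M1s | ].
eapply der_trans; [ eapply der_op; [ apply (IH (CL c1 a1) (CL c2 b1)); [ simpl; lia | revert Hc; clsolve ] | apply der_refl ] | ].
cbn [plug].
eapply der_trans; [ apply M1s | ].
apply der_refl.
Qed.

Lemma SWc_32 (a0 a1 b0 b1 : term) (c1 c2 : ctx)
  (IH : forall D1 D2, clen D1 + clen D2 < clen (CL (CL c1 a1) a0) + clen (CL (CR b1 c2) b0) -> cond D1 D2 -> SWst D1 D2)
  (Hc : cond (CL (CL c1 a1) a0) (CL (CR b1 c2) b0)) : SWst (CL (CL c1 a1) a0) (CL (CR b1 c2) b0).
Proof.
intros X Z; cbn [plug].
eapply der_trans; [ apply M1s | ].
eapply der_trans; [ eapply der_op; [ apply (IH (CL c1 a1) (CR b1 c2)); [ simpl; lia | revert Hc; clsolve ] | apply der_refl ] | ].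
cbn [plug].
eapply der_trans; [ apply M1s | ].
apply der_refl.
Qed.

Lemma SWc_33 (a0 a1 b0 b1 : term) (c1 c2 : ctx)
  (IH : forall D1 D2, clen D1 + clen D2 < clen (CL (CL c1 a1) a0) + clen (CR b0 (CL c2 b1)) -> cond D1 D2 -> SWst D1 D2)
  (Hc : cond (CL (CL c1 a1) a0) (CR b0 (CL c2 b1))) : SWst (CL (CL c1 a1) a0) (CR b0 (CL c2 b1)).
Proof.
intros X Z; cbn [plug].
eapply der_trans; [ apply M3s | ].
eapply der_trans; [ eapply der_op; [ eapply der_op; [ apply (IH c1 (CR b0 (CL c2 b1))); [ simpl; lia | revert Hc; clsolve ] | apply der_refl ] | apply der_refl ] | ].
cbn [plug].
eapply der_trans; [ apply M3s | ].
apply der_refl.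
Qed.

Lemma SWc_34 (a0 a1 b0 b1 : term) (c1 c2 : ctx)
  (IH : forall D1 D2, clen D1 + clen D2 < clen (CL (CL c1 a1) a0) + clen (CR b0 (CR b1 c2)) -> cond D1 D2 -> SWst D1 D2)
  (Hc : cond (CL (CL c1 a1) a0) (CR b0 (CR b1 c2))) : SWst (CL (CL c1 a1) a0) (CR b0 (CR b1 c2)).
Proof.
intros X Z; cbn [plug].
eapply der_trans; [ apply M3s | ].
eapply der_trans; [ eapply der_op; [ eapply der_op; [ apply (IH c1 (CR b0 (CR b1 c2))); [ simpl; lia | revert Hc; clsolve ] | apply der_refl ] | apply der_refl ] | ].
cbn [plug].
eapply der_trans; [ apply M3s | ].
apply der_refl.
Qed.

Lemma SWc_36 (a0 a1 : term)
  (IH : forall D1 D2, clen D1 + clen D2 < clen (CL (CR a1 Hole) a0) + clen Hole -> cond D1 D2 -> SWst D1 D2)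
  (Hc : cond (CL (CR a1 Hole) a0) Hole) : SWst (CL (CR a1 Hole) a0) Hole.
Proof.
intros X Z; cbn [plug].
eapply der_trans; [ apply M3s | ].
apply der_refl.
Qed.

Lemma SWc_37 (a0 a1 a2 : term) (c1 : ctx)
  (IH : forall D1 D2, clen D1 + clen D2 < clen (CL (CR a1 (CL c1 a2)) a0) + clen Hole -> cond D1 D2 -> SWst D1 D2)
  (Hc : cond (CL (CR a1 (CL c1 a2)) a0) Hole) : SWst (CL (CR a1 (CL c1 a2)) a0) Hole.
Proof.
intros X Z; cbn [plug].
eapply der_trans; [ eapply der_op; [ apply M4s | apply der_refl ] | ].
eapply der_trans; [ apply (IH (CR (Op a1 (Op a0 a2)) c1) Hole); [ simpl; lia | revert Hc; clsolve ] | ].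
cbn [plug].
eapply der_trans; [ eapply der_op; [ apply M4s | apply der_refl ] | ].
apply der_refl.
Qed.

Lemma SWc_38 (a0 a1 a2 : term) (c1 : ctx)
  (IH : forall D1 D2, clen D1 + clen D2 < clen (CL (CR a1 (CR a2 c1)) a0) + clen Hole -> cond D1 D2 -> SWst D1 D2)
  (Hc : cond (CL (CR a1 (CR a2 c1)) a0) Hole) : SWst (CL (CR a1 (CR a2 c1)) a0) Hole.
Proof.
intros X Z; cbn [plug].
eapply der_trans; [ apply M3s | ].
eapply der_trans; [ apply M2s | ].
eapply der_trans; [ apply M6s | ].
eapply der_trans; [ eapply der_op; [ apply der_refl | eapply der_op; [ apply der_refl | apply (IH (CL c1 a0) Hole); [ simpl; lia | revert Hc; clsolve ] ] ] | ].
cbn [plug].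
eapply der_trans; [ apply M6s | ].
eapply der_trans; [ apply M2s | ].
eapply der_trans; [ apply M3s | ].
apply der_refl.
Qed.

Lemma SWc_39 (a0 a1 b0 : term) (c1 : ctx)
  (IH : forall D1 D2, clen D1 + clen D2 < clen (CL (CR a1 c1) a0) + clen (CL Hole b0) -> cond D1 D2 -> SWst D1 D2)
  (Hc : cond (CL (CR a1 c1) a0) (CL Hole b0)) : SWst (CL (CR a1 c1) a0) (CL Hole b0).
Proof.
intros X Z; cbn [plug].
eapply der_trans; [ apply M1s | ].
eapply der_trans; [ eapply der_op; [ apply (IH (CR a1 c1) Hole); [ simpl; lia | revert Hc; clsolve ] | apply der_refl ] | ].
cbn [plug].
eapply der_trans; [ apply M1s | ].
apply der_refl.
Qed.

Lemma SWc_40 (a0 a1 b0 : term) (c1 : ctx)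
  (IH : forall D1 D2, clen D1 + clen D2 < clen (CL (CR a1 c1) a0) + clen (CR b0 Hole) -> cond D1 D2 -> SWst D1 D2)
  (Hc : cond (CL (CR a1 c1) a0) (CR b0 Hole)) : SWst (CL (CR a1 c1) a0) (CR b0 Hole).
Proof.
intros X Z; cbn [plug].
eapply der_trans; [ apply M2s | ].
eapply der_trans; [ apply M6s | ].
eapply der_trans; [ eapply der_op; [ apply der_refl | eapply der_op; [ apply der_refl | apply (IH (CL Hole a0) c1); [ simpl; lia | revert Hc; clsolve ] ] ] | ].
cbn [plug].
eapply der_trans; [ apply M6s | ].
eapply der_trans; [ apply M2s | ].
apply der_refl.
Qed.

Lemma SWc_41 (a0 a1 b0 b1 : term) (c1 c2 : ctx)
  (IH : forall D1 D2, clen D1 + clen D2 < clen (CL (CR a1 c1) a0) + clen (CL (CL c2 b1) b0) -> cond D1 D2 -> SWst D1 D2)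
  (Hc : cond (CL (CR a1 c1) a0) (CL (CL c2 b1) b0)) : SWst (CL (CR a1 c1) a0) (CL (CL c2 b1) b0).
Proof.
intros X Z; cbn [plug].
eapply der_trans; [ apply M1s | ].
eapply der_trans; [ eapply der_op; [ apply (IH (CR a1 c1) (CL c2 b1)); [ simpl; lia | revert Hc; clsolve ] | apply der_refl ] | ].
cbn [plug].
eapply der_trans; [ apply M1s | ].
apply der_refl.
Qed.

Lemma SWc_42 (a0 a1 b0 b1 : term) (c1 c2 : ctx)
  (IH : forall D1 D2, clen D1 + clen D2 < clen (CL (CR a1 c1) a0) + clen (CL (CR b1 c2) b0) -> cond D1 D2 -> SWst D1 D2)
  (Hc : cond (CL (CR a1 c1) a0) (CL (CR b1 c2) b0)) : SWst (CL (CR a1 c1) a0) (CL (CR b1 c2) b0).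
Proof.
intros X Z; cbn [plug].
eapply der_trans; [ apply M1s | ].
eapply der_trans; [ eapply der_op; [ apply (IH (CR a1 c1) (CR b1 c2)); [ simpl; lia | revert Hc; clsolve ] | apply der_refl ] | ].
cbn [plug].
eapply der_trans; [ apply M1s | ].
apply der_refl.
Qed.

Lemma SWc_43 (a0 a1 b0 b1 : term) (c1 c2 : ctx)
  (IH : forall D1 D2, clen D1 + clen D2 < clen (CL (CR a1 c1) a0) + clen (CR b0 (CL c2 b1)) -> cond D1 D2 -> SWst D1 D2)
  (Hc : cond (CL (CR a1 c1) a0) (CR b0 (CL c2 b1))) : SWst (CL (CR a1 c1) a0) (CR b0 (CL c2 b1)).
Proof.
intros X Z; cbn [plug].
eapply der_trans; [ apply M2s | ].
eapply der_trans; [ apply M3s | ].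
eapply der_trans; [ eapply der_op; [ eapply der_op; [ apply (IH c2 (CR b0 (CR a1 c1))); [ simpl; lia | revert Hc; clsolve ] | apply der_refl ] | apply der_refl ] | ].
cbn [plug].
eapply der_trans; [ apply M3s | ].
eapply der_trans; [ apply M2s | ].
apply der_refl.
Qed.

Lemma SWc_44 (a0 a1 b0 b1 : term) (c1 c2 : ctx)
  (IH : forall D1 D2, clen D1 + clen D2 < clen (CL (CR a1 c1) a0) + clen (CR b0 (CR b1 c2)) -> cond D1 D2 -> SWst D1 D2)
  (Hc : cond (CL (CR a1 c1) a0) (CR b0 (CR b1 c2))) : SWst (CL (CR a1 c1) a0) (CR b0 (CR b1 c2)).
Proof.
intros X Z; cbn [plug].
eapply der_trans; [ apply M6s | ].
eapply der_trans; [ eapply der_op; [ apply der_refl | eapply der_op; [ apply der_refl | apply (IH (CL (CR a1 c1) a0) c2); [ simpl; lia | revert Hc; clsolve ] ] ] | ].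
cbn [plug].
eapply der_trans; [ apply M6s | ].
apply der_refl.
Qed.

Lemma SWc_46 (a0 a1 : term)
  (IH : forall D1 D2, clen D1 + clen D2 < clen (CR a0 (CL Hole a1)) + clen Hole -> cond D1 D2 -> SWst D1 D2)
  (Hc : cond (CR a0 (CL Hole a1)) Hole) : SWst (CR a0 (CL Hole a1)) Hole.
Proof.
intros X Z; cbn [plug].
eapply der_trans; [ apply M4s | ].
apply der_refl.
Qed.

Lemma SWc_47 (a0 a1 a2 : term) (c1 : ctx)
  (IH : forall D1 D2, clen D1 + clen D2 < clen (CR a0 (CL (CL c1 a2) a1)) + clen Hole -> cond D1 D2 -> SWst D1 D2)
  (Hc : cond (CR a0 (CL (CL c1 a2) a1)) Hole) : SWst (CR a0 (CL (CL c1 a2) a1)) Hole.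
Proof.
intros X Z; cbn [plug].
eapply der_trans; [ apply M4s | ].
eapply der_trans; [ apply M1s | ].
eapply der_trans; [ apply M5s | ].
eapply der_trans; [ eapply der_op; [ apply der_refl | eapply der_op; [ apply (IH Hole (CR a0 c1)); [ simpl; lia | revert Hc; clsolve ] | apply der_refl ] ] | ].
cbn [plug].
eapply der_trans; [ apply M5s | ].
eapply der_trans; [ apply M1s | ].
eapply der_trans; [ apply M4s | ].
apply der_refl.
Qed.

Lemma SWc_48 (a0 a1 a2 : term) (c1 : ctx)
  (IH : forall D1 D2, clen D1 + clen D2 < clen (CR a0 (CL (CR a2 c1) a1)) + clen Hole -> cond D1 D2 -> SWst D1 D2)
  (Hc : cond (CR a0 (CL (CR a2 c1) a1)) Hole) : SWst (CR a0 (CL (CR a2 c1) a1)) Hole.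
Proof.
intros X Z; cbn [plug].
eapply der_trans; [ eapply der_op; [ apply M5s | apply der_refl ] | ].
eapply der_trans; [ apply (IH (CL c1 (Op (Op a2 a0) a1)) Hole); [ simpl; lia | revert Hc; clsolve ] | ].
cbn [plug].
eapply der_trans; [ eapply der_op; [ apply M5s | apply der_refl ] | ].
apply der_refl.
Qed.

Lemma SWc_49 (a0 a1 b0 : term) (c1 : ctx)
  (IH : forall D1 D2, clen D1 + clen D2 < clen (CR a0 (CL c1 a1)) + clen (CL Hole b0) -> cond D1 D2 -> SWst D1 D2)
  (Hc : cond (CR a0 (CL c1 a1)) (CL Hole b0)) : SWst (CR a0 (CL c1 a1)) (CL Hole b0).
Proof.
intros X Z; cbn [plug].
eapply der_trans; [ apply M1s | ].
eapply der_trans; [ apply M5s | ].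
eapply der_trans; [ eapply der_op; [ apply der_refl | eapply der_op; [ apply (IH c1 (CR a0 Hole)); [ simpl; lia | revert Hc; clsolve ] | apply der_refl ] ] | ].
cbn [plug].
eapply der_trans; [ apply M5s | ].
eapply der_trans; [ apply M1s | ].
apply der_refl.
Qed.

Lemma SWc_50 (a0 a1 b0 : term) (c1 : ctx)
  (IH : forall D1 D2, clen D1 + clen D2 < clen (CR a0 (CL c1 a1)) + clen (CR b0 Hole) -> cond D1 D2 -> SWst D1 D2)
  (Hc : cond (CR a0 (CL c1 a1)) (CR b0 Hole)) : SWst (CR a0 (CL c1 a1)) (CR b0 Hole).
Proof.
intros X Z; cbn [plug].
eapply der_trans; [ apply M1s | ].
eapply der_trans; [ eapply der_op; [ apply der_refl | apply (IH (CL c1 a1) Hole); [ simpl; lia | revert Hc; clsolve ] ] | ].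
cbn [plug].
eapply der_trans; [ apply M1s | ].
apply der_refl.
Qed.

Lemma SWc_51 (a0 a1 b0 b1 : term) (c1 c2 : ctx)
  (IH : forall D1 D2, clen D1 + clen D2 < clen (CR a0 (CL c1 a1)) + clen (CL (CL c2 b1) b0) -> cond D1 D2 -> SWst D1 D2)
  (Hc : cond (CR a0 (CL c1 a1)) (CL (CL c2 b1) b0)) : SWst (CR a0 (CL c1 a1)) (CL (CL c2 b1) b0).
Proof.
intros X Z; cbn [plug].
eapply der_trans; [ apply M5s | ].
eapply der_trans; [ eapply der_op; [ apply der_refl | eapply der_op; [ apply (IH c2 (CR a0 (CL c1 a1))); [ simpl; lia | revert Hc; clsolve ] | apply der_refl ] ] | ].
cbn [plug].
eapply der_trans; [ apply M5s | ].
apply der_refl.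
Qed.

Lemma SWc_52 (a0 a1 b0 b1 : term) (c1 c2 : ctx)
  (IH : forall D1 D2, clen D1 + clen D2 < clen (CR a0 (CL c1 a1)) + clen (CL (CR b1 c2) b0) -> cond D1 D2 -> SWst D1 D2)
  (Hc : cond (CR a0 (CL c1 a1)) (CL (CR b1 c2) b0)) : SWst (CR a0 (CL c1 a1)) (CL (CR b1 c2) b0).
Proof.
intros X Z; cbn [plug].
eapply der_trans; [ apply M1s | ].
eapply der_trans; [ apply M4s | ].
eapply der_trans; [ eapply der_op; [ eapply der_op; [ apply der_refl | apply (IH (CL (CL c1 a1) b0) c2); [ simpl; lia | revert Hc; clsolve ] ] | apply der_refl ] | ].
cbn [plug].
eapply der_trans; [ apply M4s | ].
eapply der_trans; [ apply M1s | ].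
apply der_refl.
Qed.

Lemma SWc_53 (a0 a1 b0 b1 : term) (c1 c2 : ctx)
  (IH : forall D1 D2, clen D1 + clen D2 < clen (CR a0 (CL c1 a1)) + clen (CR b0 (CL c2 b1)) -> cond D1 D2 -> SWst D1 D2)
  (Hc : cond (CR a0 (CL c1 a1)) (CR b0 (CL c2 b1))) : SWst (CR a0 (CL c1 a1)) (CR b0 (CL c2 b1)).
Proof.
intros X Z; cbn [plug].
eapply der_trans; [ apply M1s | ].
eapply der_trans; [ eapply der_op; [ apply der_refl | apply (IH (CL c1 a1) (CL c2 b1)); [ simpl; lia | revert Hc; clsolve ] ] | ].
cbn [plug].
eapply der_trans; [ apply M1s | ].
apply der_refl.
Qed.

Lemma SWc_54 (a0 a1 b0 b1 : term) (c1 c2 : ctx)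
  (IH : forall D1 D2, clen D1 + clen D2 < clen (CR a0 (CL c1 a1)) + clen (CR b0 (CR b1 c2)) -> cond D1 D2 -> SWst D1 D2)
  (Hc : cond (CR a0 (CL c1 a1)) (CR b0 (CR b1 c2))) : SWst (CR a0 (CL c1 a1)) (CR b0 (CR b1 c2)).
Proof.
intros X Z; cbn [plug].
eapply der_trans; [ apply M1s | ].
eapply der_trans; [ eapply der_op; [ apply der_refl | apply (IH (CL c1 a1) (CR b1 c2)); [ simpl; lia | revert Hc; clsolve ] ] | ].
cbn [plug].
eapply der_trans; [ apply M1s | ].
apply der_refl.
Qed.

Lemma SWc_55 (a0 a1 : term) (c1 : ctx)
  (IH : forall D1 D2, clen D1 + clen D2 < clen (CR a0 (CR a1 c1)) + clen Hole -> cond D1 D2 -> SWst D1 D2)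
  (Hc : cond (CR a0 (CR a1 c1)) Hole) : SWst (CR a0 (CR a1 c1)) Hole.
Proof.
intros X Z; cbn [plug].
eapply der_trans; [ apply M4s | ].
eapply der_trans; [ eapply der_op; [ eapply der_op; [ apply der_refl | apply (IH Hole c1); [ simpl; lia | revert Hc; clsolve ] ] | apply der_refl ] | ].
cbn [plug].
eapply der_trans; [ apply M4s | ].
apply der_refl.
Qed.

Lemma SWc_56 (a0 a1 b0 : term) (c1 : ctx)
  (IH : forall D1 D2, clen D1 + clen D2 < clen (CR a0 (CR a1 c1)) + clen (CL Hole b0) -> cond D1 D2 -> SWst D1 D2)
  (Hc : cond (CR a0 (CR a1 c1)) (CL Hole b0)) : SWst (CR a0 (CR a1 c1)) (CL Hole b0).
Proof.
intros X Z; cbn [plug].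
eapply der_trans; [ apply M4s | ].
eapply der_trans; [ eapply der_op; [ eapply der_op; [ apply der_refl | apply (IH (CL Hole b0) c1); [ simpl; lia | revert Hc; clsolve ] ] | apply der_refl ] | ].
cbn [plug].
eapply der_trans; [ apply M4s | ].
apply der_refl.
Qed.

Lemma SWc_57 (a0 a1 b0 : term) (c1 : ctx)
  (IH : forall D1 D2, clen D1 + clen D2 < clen (CR a0 (CR a1 c1)) + clen (CR b0 Hole) -> cond D1 D2 -> SWst D1 D2)
  (Hc : cond (CR a0 (CR a1 c1)) (CR b0 Hole)) : SWst (CR a0 (CR a1 c1)) (CR b0 Hole).
Proof.
intros X Z; cbn [plug].
eapply der_trans; [ apply M1s | ].
eapply der_trans; [ eapply der_op; [ apply der_refl | apply (IH (CR a1 c1) Hole); [ simpl; lia | revert Hc; clsolve ] ] | ].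
cbn [plug].
eapply der_trans; [ apply M1s | ].
apply der_refl.
Qed.

Lemma SWc_58 (a0 a1 b0 b1 : term) (c1 c2 : ctx)
  (IH : forall D1 D2, clen D1 + clen D2 < clen (CR a0 (CR a1 c1)) + clen (CL (CL c2 b1) b0) -> cond D1 D2 -> SWst D1 D2)
  (Hc : cond (CR a0 (CR a1 c1)) (CL (CL c2 b1) b0)) : SWst (CR a0 (CR a1 c1)) (CL (CL c2 b1) b0).
Proof.
intros X Z; cbn [plug].
eapply der_trans; [ apply M4s | ].
eapply der_trans; [ eapply der_op; [ eapply der_op; [ apply der_refl | apply (IH (CL (CL c2 b1) b0) c1); [ simpl; lia | revert Hc; clsolve ] ] | apply der_refl ] | ].
cbn [plug].
eapply der_trans; [ apply M4s | ].
apply der_refl.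
Qed.

Lemma SWc_59 (a0 a1 b0 b1 : term) (c1 c2 : ctx)
  (IH : forall D1 D2, clen D1 + clen D2 < clen (CR a0 (CR a1 c1)) + clen (CL (CR b1 c2) b0) -> cond D1 D2 -> SWst D1 D2)
  (Hc : cond (CR a0 (CR a1 c1)) (CL (CR b1 c2) b0)) : SWst (CR a0 (CR a1 c1)) (CL (CR b1 c2) b0).
Proof.
intros X Z; cbn [plug].
eapply der_trans; [ apply M4s | ].
eapply der_trans; [ eapply der_op; [ eapply der_op; [ apply der_refl | apply (IH (CL (CR b1 c2) b0) c1); [ simpl; lia | revert Hc; clsolve ] ] | apply der_refl ] | ].
cbn [plug].
eapply der_trans; [ apply M4s | ].
apply der_refl.
Qed.

Lemma SWc_60 (a0 a1 b0 b1 : term) (c1 c2 : ctx)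
  (IH : forall D1 D2, clen D1 + clen D2 < clen (CR a0 (CR a1 c1)) + clen (CR b0 (CL c2 b1)) -> cond D1 D2 -> SWst D1 D2)
  (Hc : cond (CR a0 (CR a1 c1)) (CR b0 (CL c2 b1))) : SWst (CR a0 (CR a1 c1)) (CR b0 (CL c2 b1)).
Proof.
intros X Z; cbn [plug].
eapply der_trans; [ apply M1s | ].
eapply der_trans; [ eapply der_op; [ apply der_refl | apply (IH (CR a1 c1) (CL c2 b1)); [ simpl; lia | revert Hc; clsolve ] ] | ].
cbn [plug].
eapply der_trans; [ apply M1s | ].
apply der_refl.
Qed.

Lemma SWc_61 (a0 a1 b0 b1 : term) (c1 c2 : ctx)
  (IH : forall D1 D2, clen D1 + clen D2 < clen (CR a0 (CR a1 c1)) + clen (CR b0 (CR b1 c2)) -> cond D1 D2 -> SWst D1 D2)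
  (Hc : cond (CR a0 (CR a1 c1)) (CR b0 (CR b1 c2))) : SWst (CR a0 (CR a1 c1)) (CR b0 (CR b1 c2)).
Proof.
intros X Z; cbn [plug].
eapply der_trans; [ apply M1s | ].
eapply der_trans; [ eapply der_op; [ apply der_refl | apply (IH (CR a1 c1) (CR b1 c2)); [ simpl; lia | revert Hc; clsolve ] ] | ].
cbn [plug].
eapply der_trans; [ apply M1s | ].
apply der_refl.
Qed.

Lemma SW_gen N : forall C1 C2, clen C1 + clen C2 < N -> cond C1 C2 -> SWst C1 C2.
Proof.
induction N as [|N IHN]; intros C1 C2 HN Hc; first by [].
have IH : forall D1 D2, clen D1 + clen D2 < clen C1 + clen C2 -> cond D1 D2 -> SWst D1 D2.
{ intros D1 D2 H; apply IHN; lia. }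
clear IHN HN.
destruct C1 as [|[|c1 a1|a1 c1] a0|a0 [|c1 a1|a1 c1]];
destruct C2 as [|[|c2 b1|b1 c2] b0|b0 [|c2 b1|b1 c2]];
try (destruct c2 as [|c2 b2|b2 c2]); try (destruct c1 as [|c1 a2|a2 c1]);
first [ eapply SWc_1; [exact IH | exact Hc] | eapply SWc_2; [exact IH | exact Hc] | eapply SWc_3; [exact IH | exact Hc] | eapply SWc_4; [exact IH | exact Hc] | eapply SWc_6; [exact IH | exact Hc] | eapply SWc_7; [exact IH | exact Hc] | eapply SWc_8; [exact IH | exact Hc] | eapply SWc_10; [exact IH | exact Hc] | eapply SWc_11; [exact IH | exact Hc] | eapply SWc_12; [exact IH | exact Hc] | eapply SWc_13; [exact IH | exact Hc] | eapply SWc_14; [exact IH | exact Hc] | eapply SWc_15; [exact IH | exact Hc] | eapply SWc_16; [exact IH | exact Hc] | eapply SWc_17; [exact IH | exact Hc] | eapply SWc_18; [exact IH | exact Hc] | eapply SWc_19; [exact IH | exact Hc] | eapply SWc_20; [exact IH | exact Hc] | eapply SWc_21; [exact IH | exact Hc] | eapply SWc_22; [exact IH | exact Hc] | eapply SWc_23; [exact IH | exact Hc] | eapply SWc_24; [exact IH | exact Hc] | eapply SWc_25; [exact IH | exact Hc] | eapply SWc_26; [exact IH | exact Hc] | eapply SWc_27; [exact IH | exact Hc] | eapply SWc_28; [exact IH | exact Hc] | eapply SWc_29; [exact IH | exact Hc] | eapply SWc_30; [exact IH | exact Hc] | eapply SWc_31; [exact IH | exact Hc] | eapply SWc_32; [exact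 IH | exact Hc] | eapply SWc_33; [exact IH | exact Hc] | eapply SWc_34; [exact IH | exact Hc] | eapply SWc_36; [exact IH | exact Hc] | eapply SWc_37; [exact IH | exact Hc] | eapply SWc_38; [exact IH | exact Hc] | eapply SWc_39; [exact IH | exact Hc] | eapply SWc_40; [exact IH | exact Hc] | eapply SWc_41; [exact IH | exact Hc] | eapply SWc_42; [exact IH | exact Hc] | eapply SWc_43; [exact IH | exact Hc] | eapply SWc_44; [exact IH | exact Hc] | eapply SWc_46; [exact IH | exact Hc] | eapply SWc_47; [exact IH | exact Hc] | eapply SWc_48; [exact IH | exact Hc] | eapply SWc_49; [exact IH | exact Hc] | eapply SWc_50; [exact IH | exact Hc] | eapply SWc_51; [exact IH | exact Hc] | eapply SWc_52; [exact IH | exact Hc] | eapply SWc_53; [exact IH | exact Hc] | eapply SWc_54; [exact IH | exact Hc] | eapply SWc_55; [exact IH | exact Hc] | eapply SWc_56; [exact IH | exact Hc] | eapply SWc_57; [exact IH | exact Hc] | eapply SWc_58; [exact IH | exact Hc] | eapply SWc_59; [exact IH | exact Hc] | eapply SWc_60; [exact IH | exact Hc] | eapply SWc_61; [exact IH | exact Hc] ].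
Qed.

Lemma SW C1 C2 : cond C1 C2 -> SWst C1 C2.
Proof. intros; apply (@SW_gen (clen C1 + clen C2).+1); [lia | assumption]. Qed.


Definition c11 : bool * bool := (true, true).

Fixpoint ws (w : nat -> nat) (t : term) (c : bool * bool) : nat :=
  match t with
  | Var n => if c == c0 then w n else 0
  | Op a b => ws w a (cxor cL c) + ws w b (cxor cR c)
  end.

Definition peq s t := forall w c, ws w s c = ws w t c.

Fixpoint tsize (t : term) : nat :=
  match t with Var _ => 1 | Op a b => tsize a + tsize b end.

Definition wone : nat -> nat := fun _ => 1.
Definition ind (x : nat) : nat -> nat := fun y => if y == x then 1 else 0.

Ltac bcl := cbv [cxor cL cR c0 c11 xorb fst snd].

Lemma cxor0 c : cxor c0 c = c.
Proof. by case: c => [[] []]. Qed.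
Lemma cxorK a c : cxor a (cxor a c) = c.
Proof. by case: a => [[] []]; case: c => [[] []]. Qed.
Lemma cxorA a b c : cxor a (cxor b c) = cxor (cxor a b) c.
Proof. by case: a => [[] []]; case: b => [[] []]; case: c => [[] []]. Qed.
Lemma cxorC a b : cxor a b = cxor b a.
Proof. by case: a => [[] []]; case: b => [[] []]. Qed.

Lemma tsize_ws t : tsize t = ws wone t c0 + ws wone t cL + ws wone t cR + ws wone t c11.
Proof.
elim: t => [n|a IHa b IHb] /=; first by rewrite /wone.
rewrite IHa IHb. bcl. lia.
Qed.

Lemma tsize_pos t : 0 < tsize t.
Proof. elim: t => [n|a IHa b IHb] //=; lia. Qed.

Lemma peq_refl t : peq t t. Proof. by []. Qed.
Lemma peq_sym s t : peq s t -> peq t s. Proof. by move=> h w c; rewrite h. Qed.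
Lemma peq_trans s t u : peq s t -> peq t u -> peq s u.
Proof. by move=> h1 h2 w c; rewrite h1 h2. Qed.

Lemma peq_size s t : peq s t -> tsize s = tsize t.
Proof. by move=> h; rewrite !tsize_ws !h. Qed.

Lemma peq_Op a b a' b' : peq (Op a b) (Op a' b') -> peq a a' -> peq b b'.
Proof.
move=> h ha w c. move: (h w (cxor cR c)) => /=. rewrite ha cxorK. lia.
Qed.

Lemma peq_Op' a b a' b' : peq (Op a b) (Op a' b') -> peq b b' -> peq a a'.
Proof.
move=> h hb w c. move: (h w (cxor cL c)) => /=. rewrite hb cxorK. lia.
Qed.

Lemma peq_Var x y : peq (Var x) (Var y) -> x = y.
Proof.
move=> h. move: (h (ind x) c0) => /=. rewrite /ind eqxx.
by case: eqP.
Qed.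

Lemma ws_plug w C u c : ws w u (cxor (ccls C) c) <= ws w (plug C u) c.
Proof.
elim: C c => [|C IH r|l C IH] c /=; first by rewrite cxor0.
- have := IH (cxor cL c). have -> : cxor (ccls C) (cxor cL c) = cxor (cxor cL (ccls C)) c by case: (ccls C) => [[] []]; case: c => [[] []]. lia.
- have := IH (cxor cR c). have -> : cxor (ccls C) (cxor cR c) = cxor (cxor cR (ccls C)) c by case: (ccls C) => [[] []]; case: c => [[] []]. lia.
Qed.

Lemma occ w t c : 0 < ws w t c -> exists C x, t = plug C (Var x) /\ ccls C = c /\ 0 < w x.
Proof.
elim: t c => [n|a IHa b IHb] c /=.
- case: eqP => [->|] // h. by exists Hole, n.
- move=> h. have [h1|h2] : 0 < ws w a (cxor cL c) \/ 0 < ws w b (cxor cR c) by lia.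
  + have [C [x [e [hc hx]]]] := IHa _ h1. exists (CL C b), x; split; first by rewrite e.
    split=> //=. by rewrite hc cxorK.
  + have [C [x [e [hc hx]]]] := IHb _ h2. exists (CR a C), x; split; first by rewrite e.
    split=> //=. by rewrite hc cxorK.
Qed.

Lemma occ_ind x t c : 0 < ws (ind x) t c -> exists C, t = plug C (Var x) /\ ccls C = c.
Proof.
move=> /occ [C [y [e [hc hy]]]]. exists C. move: hy; rewrite /ind. case: eqP => // eyx _. by subst.
Qed.

Lemma ws_leaf w C x c : ccls C = c -> w x <= ws w (plug C (Var x)) c.
Proof.
move=> hc. have := ws_plug w C (Var x) c. rewrite /= -hc.
have -> : cxor (ccls C) (ccls C) == c0 by case: (ccls C) => [[] []].
by [].
Qed.

Lemma der_plug C t u : der t u -> der (plug C t) (plug C u).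
Proof.
move=> h; elim: C => [|C IH r|l C IH] //=.
- by apply: der_op => //; apply: der_refl.
- by apply: der_op => //; apply: der_refl.
Qed.


Lemma eval_subst (T : Type) (op : T -> T -> T) v s t :
  eval op v (subst s t) = eval op (fun n => eval op v (s n)) t.
Proof. elim: t => [n|a IHa b IHb] //=. by rewrite IHa IHb. Qed.

Lemma sound (T : Type) (op : T -> T -> T) (E : identity -> Prop) :
  (forall e, E e -> satisfies op e) ->
  forall s t, derivable E s t -> forall v, eval op v s = eval op v t.
Proof.
move=> hE s t; elim=> {s t}.
- move=> e he s v. rewrite !eval_subst. exact: (hE e he).
- by [].
- by move=> t u _ h v; rewrite h.
- by move=> t u w _ h1 _ h2 v; rewrite h1 h2.
- by move=> t1 t2 u1 u2 _ h1 _ h2 v /=; rewrite h1 h2.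
Qed.

Section ZmodPart.
Local Open Scope ring_scope.

Lemma valid (G : zmodType) (i : 'I_6) :
  [/\ satisfies (fun x y : G => x + y) (Mfam i),
      satisfies (fun x y : G => x - y) (Mfam i),
      satisfies (fun x y : G => - x + y) (Mfam i) &
      satisfies (fun x y : G => - x - y) (Mfam i)].
Proof.
case: i => [[|[|[|[|[|[|//]]]]]] Hi] /=; rewrite /Mfam /=;
split=> v /=; rewrite ?GRing.opprD ?GRing.opprK ?GRing.addrA.
all: first
 [ by rewrite (ACl (((1*3)*2)*4))
 | by rewrite (ACl (((4*2)*3)*1))
 | by rewrite (ACl (((1*4)*3)*2))
 | by rewrite (ACl (((3*2)*1)*4)) ].
Qed.

Lemma ev1 w t : eval (fun x y : int => x + y) (fun n => (w n)%:Z) t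
   = (ws w t c0 + ws w t cL + ws w t cR + ws w t c11)%:Z.
Proof. elim: t => [n|a IHa b IHb] /=; first (bcl; rewrite /=; lia). rewrite IHa IHb; bcl. lia. Qed.
Lemma ev2 w t : eval (fun x y : int => x - y) (fun n => (w n)%:Z) t
   = (ws w t c0)%:Z - (ws w t cR)%:Z + (ws w t cL)%:Z - (ws w t c11)%:Z.
Proof. elim: t => [n|a IHa b IHb] /=; first (bcl; rewrite /=; lia). rewrite IHa IHb; bcl. lia. Qed.
Lemma ev3 w t : eval (fun x y : int => - x + y) (fun n => (w n)%:Z) t
   = (ws w t c0)%:Z + (ws w t cR)%:Z - (ws w t cL)%:Z - (ws w t c11)%:Z.
Proof. elim: t => [n|a IHa b IHb] /=; first (bcl; rewrite /=; lia). rewrite IHa IHb; bcl. lia. Qed.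
Lemma ev4 w t : eval (fun x y : int => - x - y) (fun n => (w n)%:Z) t
   = (ws w t c0)%:Z - (ws w t cR)%:Z - (ws w t cL)%:Z + (ws w t c11)%:Z.
Proof. elim: t => [n|a IHa b IHb] /=; first (bcl; rewrite /=; lia). rewrite IHa IHb; bcl. lia. Qed.

Lemma peq_of4 s t :
  (forall v, eval (fun x y : int => x + y) v s = eval (fun x y : int => x + y) v t) ->
  (forall v, eval (fun x y : int => x - y) v s = eval (fun x y : int => x - y) v t) ->
  (forall v, eval (fun x y : int => - x + y) v s = eval (fun x y : int => - x + y) v t) ->
  (forall v, eval (fun x y : int => - x - y) v s = eval (fun x y : int => - x - y) v t) ->
  peq s t.
Proof.
move=> h1 h2 h3 h4 w c.
have := h1 (fun n => (w n)%:Z); have := h2 (fun n => (w n)%:Z);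
have := h3 (fun n => (w n)%:Z); have := h4 (fun n => (w n)%:Z).
rewrite !ev1 !ev2 !ev3 !ev4.
case: c => [[] []]; bcl; lia.
Qed.

Lemma Mset_sat (G : zmodType) e : Mset e ->
  [/\ satisfies (fun x y : G => x + y) e, satisfies (fun x y : G => x - y) e,
      satisfies (fun x y : G => - x + y) e & satisfies (fun x y : G => - x - y) e].
Proof. by case=> i ->; apply: valid. Qed.

Lemma der_Sigma s t : der s t -> Sigma (s, t).
Proof.
move=> h G; split=> v; apply: (sound _ h) => e he; by case: (Mset_sat G he).
Qed.

Lemma Sigma_peq e : Sigma e -> peq e.1 e.2.
Proof.
move=> h; case: (h int) => h1 h2 h3 h4.
by apply: peq_of4.
Qed.

Lemma der_peq s t : der s t -> peq s t.
Proof. by move=> /der_Sigma /Sigma_peq. Qed.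

End ZmodPart.


Lemma swp C1 C2 (h : cond C1 C2) X Z :
  der (Op (plug C1 X) (plug C2 Z)) (Op (plug C1 Z) (plug C2 X)).
Proof. exact: (SW h X Z). Qed.

Ltac cnd := rewrite /cond /=; bcl; try reflexivity.

Lemma cls_c0 C : cxor cL (ccls C) = cL -> ccls C = c0.
Proof. by case: (ccls C) => [[] []]. Qed.

Lemma H10 t1 a b : (exists C x, Op t1 (Op a b) = plug C (Var x) /\ ccls C = cL) ->
  exists y u, der (Op t1 (Op a b)) (Op (Var y) u).
Proof.
move=> [[|C1 r|l C2] [x [e hc]]] //.
- case: e => e1 e2; subst t1 r. move: hc => /= hc.
  have hc1 : ccls C1 = c0 by move: hc; case: (ccls C1) => [[] []].
  case E1: C1 => [|D q|p D].
  + by exists x, (Op a b); apply: der_refl.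
  + rewrite -E1.
    case: a => [a0|a1 a2].
    * case: b => [b0|b1 b2].
      --
         subst C1. move: hc1 => /= hD.
         have hD' : ccls D = cL by move: hD; case: (ccls D) => [[] []].
         exists x, (plug (CR (Var a0) D) (Op (Var b0) q)).
         apply: der_trans; first by apply: M2s.
         have h : cond Hole (CR (Var a0) D) by rewrite /cond /= hD'; bcl.
         exact: (swp h (Op (Var b0) q) (Var x)).
      -- have h1 : cond C1 (CR (Var a0) (CL Hole b2)) by rewrite /cond /= hc1; bcl.
         have h2 : cond Hole (CR (Var a0) (CL Hole b2)) by rewrite /cond /=; bcl.
         exists x, (plug (CR (Var a0) (CL Hole b2)) (plug C1 b1)).
         apply: der_trans; first exact: (swp h1 (Var x) b1).
         exact: (swp h2 (plug C1 b1) (Var x)).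
    * have h1 : cond C1 (CL (CR a1 Hole) b) by rewrite /cond /= hc1; bcl.
      have h2 : cond Hole (CL (CR a1 Hole) b) by rewrite /cond /=; bcl.
      exists x, (plug (CL (CR a1 Hole) b) (plug C1 a2)).
      apply: der_trans; first exact: (swp h1 (Var x) a2).
      exact: (swp h2 (plug C1 a2) (Var x)).
  + rewrite -E1.
    case: a => [a0|a1 a2].
    * case: b => [b0|b1 b2].
      -- subst C1. move: hc1 => /= hD.
         have hD' : ccls D = cR by move: hD; case: (ccls D) => [[] []].
         exists x, (plug (CL D (Var b0)) (Op p (Var a0))).
         apply: der_trans; first by apply: M1s.
         have h : cond Hole (CL D (Var b0)) by rewrite /cond /= hD'; bcl.
         exact: (swp h (Op p (Var a0)) (Var x)).
      -- have h1 : cond C1 (CR (Var a0) (CL Hole b2)) by rewrite /cond /= hc1; bcl.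
         have h2 : cond Hole (CR (Var a0) (CL Hole b2)) by rewrite /cond /=; bcl.
         exists x, (plug (CR (Var a0) (CL Hole b2)) (plug C1 b1)).
         apply: der_trans; first exact: (swp h1 (Var x) b1).
         exact: (swp h2 (plug C1 b1) (Var x)).
    * have h1 : cond C1 (CL (CR a1 Hole) b) by rewrite /cond /= hc1; bcl.
      have h2 : cond Hole (CL (CR a1 Hole) b) by rewrite /cond /=; bcl.
      exists x, (plug (CL (CR a1 Hole) b) (plug C1 a2)).
      apply: der_trans; first exact: (swp h1 (Var x) a2).
      exact: (swp h2 (plug C1 a2) (Var x)).
- case: e => e1 e2; subst l. move: hc => /= hc.
  have hc2 : ccls C2 = c11 by move: hc; case: (ccls C2) => [[] []].
  have h : cond Hole C2 by rewrite /cond hc2; bcl.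
  exists x, (plug C2 t1). rewrite e2.
  exact: (swp h t1 (Var x)).
Qed.

Lemma H01 a b t2 : (exists C z, Op (Op a b) t2 = plug C (Var z) /\ ccls C = cR) ->
  exists u y, der (Op (Op a b) t2) (Op u (Var y)).
Proof.
move=> [[|C1 r|l C2] [z [e hc]]] //.
- case: e => e1 e2; subst r. move: hc => /= hc.
  have hc1 : ccls C1 = c11 by move: hc; case: (ccls C1) => [[] []].
  have h : cond C1 Hole by rewrite /cond hc1; bcl.
  exists (plug C1 t2), z. rewrite e1.
  exact: (swp h (Var z) t2).
- case: e => e1 e2; subst l t2. move: hc => /= hc.
  have hc2 : ccls C2 = c0 by move: hc; case: (ccls C2) => [[] []].
  case E2: C2 => [|D q|p D].
  + by exists (Op a b), z; apply: der_refl.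
  + rewrite -E2.
    case: a => [a0|a1 a2].
    * case: b => [b0|b1 b2].
      -- subst C2. move: hc2 => /= hD.
         have hD' : ccls D = cL by move: hD; case: (ccls D) => [[] []].
         exists (plug (CR (Var a0) D) (Op (Var b0) q)), z.
         apply: der_trans; first by apply: M1s.
         have h : cond (CR (Var a0) D) Hole by rewrite /cond /= hD'; bcl.
         exact: (swp h (Var z) (Op (Var b0) q)).
      -- have h1 : cond (CR (Var a0) (CL Hole b2)) C2 by rewrite /cond /= hc2; bcl.
         have h2 : cond (CR (Var a0) (CL Hole b2)) Hole by rewrite /cond /=; bcl.
         exists (plug (CR (Var a0) (CL Hole b2)) (plug C2 b1)), z.
         apply: der_trans; first exact: (swp h1 b1 (Var z)).
         exact: (swp h2 (Var z) (plug C2 b1)).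
    * have h1 : cond (CL (CR a1 Hole) b) C2 by rewrite /cond /= hc2; bcl.
      have h2 : cond (CL (CR a1 Hole) b) Hole by rewrite /cond /=; bcl.
      exists (plug (CL (CR a1 Hole) b) (plug C2 a2)), z.
      apply: der_trans; first exact: (swp h1 a2 (Var z)).
      exact: (swp h2 (Var z) (plug C2 a2)).
  + rewrite -E2.
    case: a => [a0|a1 a2].
    * case: b => [b0|b1 b2].
      -- subst C2. move: hc2 => /= hD.
         have hD' : ccls D = cR by move: hD; case: (ccls D) => [[] []].
         exists (plug (CL D (Var b0)) (Op p (Var a0))), z.
         apply: der_trans; first by apply: M2s.
         have h : cond (CL D (Var b0)) Hole by rewrite /cond /= hD'; bcl.
         exact: (swp h (Var z) (Op p (Var a0))).
      -- have h1 : cond (CR (Var a0) (CL Hole b2)) C2 by rewrite /cond /= hc2; bcl.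
         have h2 : cond (CR (Var a0) (CL Hole b2)) Hole by rewrite /cond /=; bcl.
         exists (plug (CR (Var a0) (CL Hole b2)) (plug C2 b1)), z.
         apply: der_trans; first exact: (swp h1 b1 (Var z)).
         exact: (swp h2 (Var z) (plug C2 b1)).
    * have h1 : cond (CL (CR a1 Hole) b) C2 by rewrite /cond /= hc2; bcl.
      have h2 : cond (CL (CR a1 Hole) b) Hole by rewrite /cond /=; bcl.
      exists (plug (CL (CR a1 Hole) b) (plug C2 a2)), z.
      apply: der_trans; first exact: (swp h1 a2 (Var z)).
      exact: (swp h2 (Var z) (plug C2 a2)).
Qed.

Lemma leftmost t : exists C x, t = plug C (Var x) /\ (ccls C = c0 \/ ccls C = cL).
Proof.
elim: t => [n|a [C [x [e h]]] b _].
- by exists Hole, n; split=> //; left.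
- exists (CL C b), x; split; first by rewrite e.
  by case: h => h; [right|left]; rewrite /= h; bcl.
Qed.

Lemma no_leaf T T' C x c : der T T' -> ws wone T c = 0 -> T' = plug C (Var x) -> ccls C = c -> False.
Proof.
move=> hd h0 e hc. have := der_peq hd wone c. rewrite h0.
have := ws_leaf wone x hc. rewrite -e /wone. lia.
Qed.

Lemma H00 p q a b (h10 : ws wone (Op (Op p q) (Op a b)) cL = 0)
  (h01 : ws wone (Op (Op p q) (Op a b)) cR = 0) :
  exists x y m, der (Op (Op p q) (Op a b)) (Op (Op (Var x) (Var y)) m).
Proof.
remember (Op (Op p q) (Op a b)) as T eqn:ET.
have [x [a' [b' [q' [hT1 [eq' _]]]]]] : exists x a' b' q', der T (Op (Op (Var x) q') (Op a' b')) /\ q' = q /\ True.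
{ destruct p as [x0|p1 p2].
  - by exists x0, a, b, q; split=> //; rewrite ET; apply: der_refl.
  - have hM : der T (Op (Op b q) (Op a (Op p1 p2))) by rewrite ET; apply: M2s.
    have [C [x [e hC]]] := leftmost (Op p1 p2).
    have hC0 : ccls C = c0.
    { case: hC => // hC; exfalso.
      apply: (no_leaf (C := CR (Op b q) (CR a C)) (x := x) hM h10).
      - by rewrite /= -e.
      - by rewrite /= hC; bcl. }
    have h : cond (CL Hole q) (CR a C) by rewrite /cond /= hC0; bcl.
    exists x, a, (plug C b), q; split=> //.
    apply: der_trans; first exact: hM.
    rewrite e. exact: (swp h b (Var x)). }
subst q'.
destruct q as [y|q1 q2].
- by exists x, y, (Op a' b').
- have hM : der T (Op (Op (Var x) a') (Op (Op q1 q2) b')).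
  { apply: der_trans; first exact: hT1. by apply: M1s. }
  have [C [y [e hC]]] := leftmost (Op q1 q2).
  have hC0 : ccls C = c0.
  { case: hC => // hC; exfalso.
    apply: (no_leaf (C := CR (Op (Var x) a') (CL C b')) (x := y) hM h01).
    - by rewrite /= -e.
    - by rewrite /= hC; bcl. }
  have h : cond (CR (Var x) Hole) (CL C b') by rewrite /cond /= hC0; bcl.
  exists x, y, (Op (plug C a') b').
  apply: der_trans; first exact: hM.
  rewrite e. exact: (swp h a' (Var y)).
Qed.


Definition IHs N := forall s t, tsize s <= N -> peq s t -> der s t.

Lemma ws_Op w a b c : ws w (Op a b) c = ws w a (cxor cL c) + ws w b (cxor cR c).
Proof. by []. Qed.
Lemma ws_Var w x c : ws w (Var x) c = if c == c0 then w x else 0.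
Proof. by []. Qed.

Lemma C10 N (IH : IHs N) x u y v : tsize (Op (Var x) u) <= N.+1 ->
  peq (Op (Var x) u) (Op (Var y) v) -> der (Op (Var x) u) (Op (Var y) v).
Proof.
move=> hs hp.
case: (boolP (x == y)) => [/eqP exy | nxy].
{ subst y. have hu : peq u v := peq_Op hp (peq_refl _).
  apply: der_op; first exact: der_refl. apply: IH; last exact: hu.
  move: hs => /=; lia. }
have h1 : 0 < ws (ind x) (Op (Var y) v) cL.
{ rewrite -hp ws_Op ws_Var /ind eqxx. bcl. simpl. lia. }
have h2 : 0 < ws (ind x) v c11.
{ move: h1. rewrite ws_Op ws_Var /ind. bcl. simpl.
  have -> : (y == x) = false by apply/negbTE; rewrite eq_sym.
  by []. }
have [C [ev hC]] := occ_ind h2.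
have hc : cond Hole C by rewrite /cond hC; bcl.
have hsw := swp hc (Var y) (Var x). rewrite /= -ev in hsw.
have hp2 : peq (Op (Var x) u) (Op (Var x) (plug C (Var y))) := peq_trans hp (der_peq hsw).
have hu : peq u (plug C (Var y)) := peq_Op hp2 (peq_refl _).
have hd : der u (plug C (Var y)) by apply: IH => //; move: hs => /=; lia.
apply: der_trans; first exact: (der_op (der_refl _ (Var x)) hd).
exact: der_sym hsw.
Qed.

Lemma C01 N (IH : IHs N) x u y v : tsize (Op u (Var x)) <= N.+1 ->
  peq (Op u (Var x)) (Op v (Var y)) -> der (Op u (Var x)) (Op v (Var y)).
Proof.
move=> hs hp.
case: (boolP (x == y)) => [/eqP exy | nxy].
{ subst y. have hu : peq u v := peq_Op' hp (peq_refl _).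
  apply: der_op; last exact: der_refl. apply: IH; last exact: hu.
  move: hs => /=; lia. }
have h1 : 0 < ws (ind x) (Op v (Var y)) cR.
{ rewrite -hp ws_Op ws_Var /ind eqxx. bcl. simpl. lia. }
have h2 : 0 < ws (ind x) v c11.
{ move: h1. rewrite ws_Op ws_Var /ind. bcl. simpl.
  have -> : (y == x) = false by apply/negbTE; rewrite eq_sym.
  rewrite addn0. by []. }
have [C [ev hC]] := occ_ind h2.
have hc : cond C Hole by rewrite /cond hC; bcl.
have hsw := swp hc (Var x) (Var y). rewrite /= -ev in hsw.
have hp2 : peq (Op u (Var x)) (Op (plug C (Var y)) (Var x)) := peq_trans hp (der_peq hsw).
have hu : peq u (plug C (Var y)) := peq_Op' hp2 (peq_refl _).
have hd : der u (plug C (Var y)) by apply: IH => //; move: hs => /=; lia.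
apply: der_trans; first exact: (der_op hd (der_refl _ (Var x))).
exact: der_sym hsw.
Qed.

Lemma C00 N (IH : IHs N) x y m x' y' m' :
  tsize (Op (Op (Var x) (Var y)) m) <= N.+1 ->
  peq (Op (Op (Var x) (Var y)) m) (Op (Op (Var x') (Var y')) m') ->
  der (Op (Op (Var x) (Var y)) m) (Op (Op (Var x') (Var y')) m').
Proof.
move=> hs hp.
have [m2 hA] : exists m2, der (Op (Op (Var x') (Var y')) m') (Op (Op (Var x) (Var y')) m2).
{ case: (boolP (x' == x)) => [/eqP e | nx].
  - subst x'. exists m'. exact: der_refl.
  - have h1 : 0 < ws (ind x) (Op (Op (Var x') (Var y')) m') c0.
    { rewrite -hp !ws_Op !ws_Var /ind eqxx. bcl. simpl. lia. }
    have h2 : 0 < ws (ind x) m' cR.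
    { move: h1. rewrite !ws_Op !ws_Var /ind. bcl. simpl. rewrite (negbTE nx). by []. }
    have [C [ev hC]] := occ_ind h2.
    have hc : cond (CL Hole (Var y')) C by rewrite /cond /= hC; bcl.
    have hsw := swp hc (Var x') (Var x). rewrite /= -ev in hsw.
    by exists (plug C (Var x')). }
have hp2 := peq_trans hp (der_peq hA).
have [m3 hB] : exists m3, der (Op (Op (Var x) (Var y')) m2) (Op (Op (Var x) (Var y)) m3).
{ case: (boolP (y' == y)) => [/eqP e | ny].
  - subst y'. exists m2. exact: der_refl.
  - have h1 : 0 < ws (ind y) (Op (Op (Var x) (Var y')) m2) c11.
    { rewrite -hp2 !ws_Op !ws_Var /ind eqxx. bcl. simpl. lia. }
    have h2 : 0 < ws (ind y) m2 cL.
    { move: h1. rewrite !ws_Op !ws_Var /ind. bcl. simpl. rewrite (negbTE ny). by []. }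
    have [C [ev hC]] := occ_ind h2.
    have hc : cond (CR (Var x) Hole) C by rewrite /cond /= hC; bcl.
    have hsw := swp hc (Var y') (Var y). rewrite /= -ev in hsw.
    by exists (plug C (Var y')). }
have hp3 := peq_trans hp2 (der_peq hB).
have hm : peq m m3 := peq_Op hp3 (peq_refl _).
have hd : der m m3 by apply: IH => //; move: hs => /=; lia.
apply: der_trans; first exact: (der_op (der_refl _ _) hd).
apply: der_sym. exact: (der_trans hA hB).
Qed.

Definition thinP (b : bool * bool) (n00 n01 n10 n11 : nat) : Prop :=
  match b with
  | (false, false) => 2 * n00 + n01 + n10 = n11 + 2
  | (false, true) => n00 + 2 * n01 + n11 = n10 + 1
  | (true, false) => n00 + 2 * n10 + n11 = n01 + 1
  | (true, true) => n00 = 1 /\ n01 = 0 /\ n10 = 0 /\ n11 = 0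
  end.

Lemma thin u : forall b, (forall C W1 W2, u = plug C (Op W1 W2) -> cxor b (ccls C) <> c11) ->
  thinP b (ws wone u c0) (ws wone u cR) (ws wone u cL) (ws wone u c11).
Proof.
elim: u => [n|a IHa b' IHb] b H.
- by case: b H => [[] []] H /=; rewrite /wone; bcl.
- have hb : b <> c11.
  { move=> e. apply: (H Hole a b') => //. by rewrite e. }
  have Ha := IHa (cxor b cL) _.
  have Hb := IHb (cxor b cR) _.
  have Ha' : thinP (cxor b cL) (ws wone a c0) (ws wone a cR) (ws wone a cL) (ws wone a c11).
  { apply: IHa => C W1 W2 e. rewrite -cxorA. apply: (H (CL C b') W1 W2). by rewrite /= e. }
  have Hb' : thinP (cxor b cR) (ws wone b' c0) (ws wone b' cR) (ws wone b' cL) (ws wone b' c11).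
  { apply: IHb => C W1 W2 e. rewrite -cxorA. apply: (H (CR a C) W1 W2). by rewrite /= e. }
  rewrite !ws_Op.
  move: Ha' Hb'. case: b hb {H Ha Hb} => [[] []] hb //=; bcl => /=; lia.
Qed.

Lemma cls_of_sum w t c : 0 < ws w t c -> exists C x, t = plug C (Var x) /\ ccls C = c.
Proof. move=> /occ [C [x [e [hc _]]]]. by exists C, x. Qed.

Lemma peq_cherry a b c d : peq (Op (Var a) (Var b)) (Op (Var c) (Var d)) -> a = c /\ b = d.
Proof.
move=> hp. have h1 := hp (ind a) cL. have h2 := hp (ind b) cR.
move: h1 h2. rewrite !ws_Op !ws_Var /ind !eqxx. bcl. simpl.
case: eqP => [->|] ; case: eqP => [->|] //= ; lia.
Qed.

Lemma MIX N (IH : IHs N) x u v z : tsize (Op (Var x) u) <= N.+1 ->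
  peq (Op (Var x) u) (Op v (Var z)) -> der (Op (Var x) u) (Op v (Var z)).
Proof.
move=> hs hp.
have hsz : tsize (Op v (Var z)) <= N.+1 by rewrite -(peq_size hp).
case: (classic (exists C W1 W2, u = plug C (Op W1 W2) /\ ccls C = c11)) => [[C [W1 [W2 [eu hC]]]]|nu].
{ have hc : cond Hole C by rewrite /cond hC; bcl.
  have hsw := swp hc (Var x) (Op W1 W2). rewrite /= -eu in hsw.
  have hp1 := peq_trans (peq_sym (der_peq hsw)) hp.
  have h1 : 0 < ws (ind z) (Op (Op W1 W2) (plug C (Var x))) cR.
  { rewrite hp1 ws_Op ws_Var /ind eqxx. bcl. simpl. lia. }
  have [C' [x' [e' hC']]] := cls_of_sum h1.
  have [u' [y' hd]] := H01 (ex_intro _ C' (ex_intro _ x' (conj e' hC'))).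
  have hp2 := peq_trans (peq_sym (der_peq hd)) hp1.
  have hd2 : der (Op u' (Var y')) (Op v (Var z)).
  { apply: (C01 IH) => //. by rewrite (peq_size hp2). }
  apply: der_trans; first exact: hsw.
  apply: der_trans; first exact: hd. exact: hd2. }
case: (classic (exists C W1 W2, v = plug C (Op W1 W2) /\ ccls C = c11)) => [[C [W1 [W2 [ev hC]]]]|nv].
{ have hc : cond C Hole by rewrite /cond hC; bcl.
  have hsw := swp hc (Op W1 W2) (Var z). rewrite /= -ev in hsw.
  have hp1 := peq_trans hp (der_peq hsw).
  have h1 : 0 < ws (ind x) (Op (plug C (Var z)) (Op W1 W2)) cL.
  { rewrite -hp1 ws_Op ws_Var /ind eqxx. bcl. simpl. lia. }
  have [C' [x' [e' hC']]] := cls_of_sum h1.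
  have [y' [u' hd]] := H10 (ex_intro _ C' (ex_intro _ x' (conj e' hC'))).
  have hp2 := peq_trans hp1 (der_peq hd).
  have hd2 : der (Op (Var x) u) (Op (Var y') u') by apply: (C10 IH).
  apply: der_trans; first exact: hd2.
  apply: der_sym. apply: der_trans; first exact: hsw. exact: hd. }
have tu := thin (b := c0) (u := u) _.
have tv := thin (b := c0) (u := v) _.
have Tu : thinP c0 (ws wone u c0) (ws wone u cR) (ws wone u cL) (ws wone u c11).
{ apply: thin => C W1 W2 e hh. apply: nu. exists C, W1, W2; split=> //. by rewrite cxor0 in hh. }
have Tv : thinP c0 (ws wone v c0) (ws wone v cR) (ws wone v cL) (ws wone v c11).
{ apply: thin => C W1 W2 e hh. apply: nv. exists C, W1, W2; split=> //. by rewrite cxor0 in hh. }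
have e00 := hp wone c0. have e01 := hp wone cR. have e10 := hp wone cL. have e11 := hp wone c11.
rewrite !ws_Op !ws_Var in e00 e01 e10 e11. move: e00 e01 e10 e11. bcl. simpl. rewrite /wone => e00 e01 e10 e11.
move: Tu Tv. rewrite /thinP /c0 => Tu Tv.
have Hu1 : tsize u = 1 by rewrite tsize_ws; move: Tu Tv e00 e01 e10 e11; cbv [wone c0 cL cR c11]; lia.
have Hv1 : tsize v = 1.
{ have := peq_size hp. rewrite /= Hu1. lia. }
case: u hs hp Hu1 {nu tu Tu e00 e01 e10 e11} => [u0|u1 u2] hs hp Hu1; last first.
{ have := tsize_pos u1; have := tsize_pos u2. move: Hu1 => /=. lia. }
case: v hsz hp Hv1 {nv tv Tv} => [v0|v1 v2] hsz hp Hv1; last first.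
{ have := tsize_pos v1; have := tsize_pos v2. move: Hv1 => /=. lia. }
have [-> ->] := peq_cherry hp.
exact: der_refl.
Qed.

Lemma HEAD t1 t2 :
  (exists y u, der (Op t1 t2) (Op (Var y) u)) \/
  (exists u y, der (Op t1 t2) (Op u (Var y))) \/
  (exists x y m, der (Op t1 t2) (Op (Op (Var x) (Var y)) m) /\
     ws wone (Op t1 t2) cL = 0 /\ ws wone (Op t1 t2) cR = 0).
Proof.
case: t1 => [x|p q]; first by left; exists x, t2; apply: der_refl.
case: t2 => [z|a b]; first by right; left; exists (Op p q), z; apply: der_refl.
case: (posnP (ws wone (Op (Op p q) (Op a b)) cL)) => [h10|h10].
- case: (posnP (ws wone (Op (Op p q) (Op a b)) cR)) => [h01|h01].
  + right; right. have [x [y [m h]]] := H00 h10 h01. by exists x, y, m.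
  + right; left. have [C [x [e hc]]] := cls_of_sum h01. apply: H01. by exists C, x.
- left. have [C [x [e hc]]] := cls_of_sum h10. apply: H10. by exists C, x.
Qed.

Lemma ws_head_L w y u : w y <= ws w (Op (Var y) u) cL.
Proof. rewrite ws_Op ws_Var. bcl. simpl. lia. Qed.
Lemma ws_head_R w y u : w y <= ws w (Op u (Var y)) cR.
Proof. rewrite ws_Op ws_Var. bcl. simpl. lia. Qed.

Lemma fin3 s t a b : der s a -> der t b -> der a b -> der s t.
Proof. move=> h1 h2 h3. apply: der_trans h1 _. apply: der_trans h3 _. exact: der_sym. Qed.

Theorem complete N : IHs N.
Proof.
elim: N => [|N IH] s t hs hp.
- have := tsize_pos s. lia.
- case: s hs hp => [x|s1 s2] hs hp; case: t hp => [y|t1 t2] hp.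
  + by rewrite (peq_Var hp); apply: der_refl.
  + have := peq_size hp. have := tsize_pos t1; have := tsize_pos t2. simpl. lia.
  + have := peq_size hp. have := tsize_pos s1; have := tsize_pos s2. simpl. lia.
  + have hS := HEAD s1 s2. have hT := HEAD t1 t2.
    case: hS => [[y [u dS]] | [[u [y dS]] | [x [y [m [dS [zL zR]]]]]]];
    case: hT => [[y' [u' dT]] | [[u' [y' dT]] | [x' [y' [m' [dT [zL' zR']]]]]]];
    (have hp' := peq_trans (peq_sym (der_peq dS)) (peq_trans hp (der_peq dT)));
    (have hsz := hs; rewrite (peq_size (der_peq dS)) in hsz);
    apply: (fin3 dS dT).
    * exact: (C10 IH).
    * exact: (MIX IH).
    * exfalso. have := ws_head_L wone y u. rewrite -(der_peq dS) hp zL'. by rewrite /wone.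
    * apply: der_sym. apply: (MIX IH); last exact: (peq_sym hp').
      by rewrite -(peq_size hp').
    * exact: (C01 IH).
    * exfalso. have := ws_head_R wone y u. rewrite -(der_peq dS) hp zR'. by rewrite /wone.
    * exfalso. have := ws_head_L wone y' u'. rewrite -(der_peq dT) -hp zL. by rewrite /wone.
    * exfalso. have := ws_head_R wone y' u'. rewrite -(der_peq dT) -hp zR. by rewrite /wone.
    * exact: (C00 IH).
Qed.


Inductive E10 : Type := e0 | e1 | e2 | e3 | e4 | e5 | e6 | e7 | e8 | e9.

Definition enc (x : E10) : nat :=
  match x with e0 => 0 | e1 => 1 | e2 => 2 | e3 => 3 | e4 => 4
  | e5 => 5 | e6 => 6 | e7 => 7 | e8 => 8 | e9 => 9 end.
Definition dec (n : nat) : E10 :=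
  match n with 1 => e1 | 2 => e2 | 3 => e3 | 4 => e4 | 5 => e5
  | 6 => e6 | 7 => e7 | 8 => e8 | 9 => e9 | _ => e0 end.
Lemma enc_inj x y : enc x = enc y -> x = y.
Proof. by case: x; case: y. Qed.

Definition tab (k : nat) (a b : nat) : nat :=
  match k with
  | 0 => match a, b with 1,2 => 5 | 3,4 => 6 | 5,6 => 7 | 4,2 => 8 | 3,1 => 9 | 8,9 => 7 | _,_ => 0 end
  | 1 => match a, b with 1,2 => 5 | 3,4 => 6 | 5,6 => 7 | 1,3 => 8 | 2,4 => 9 | 8,9 => 7 | _,_ => 0 end
  | 2 => match a, b with 2,3 => 2 | 3,1 => 2 | _,_ => 0 end
  | 3 => match a, b with 2,3 => 5 | 1,5 => 6 | 6,4 => 7 | _,_ => 0 end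
  | 4 => match a, b with 3,2 => 5 | 5,1 => 6 | 4,6 => 7 | _,_ => 0 end
  | _ => match a, b with 2,3 => 1 | 3,1 => 1 | _,_ => 0 end
  end.
Definition mop (k : nat) (x y : E10) : E10 := dec (tab k (enc x) (enc y)).

Definition allE (f : E10 -> bool) :=
  f e0 && f e1 && f e2 && f e3 && f e4 && f e5 && f e6 && f e7 && f e8 && f e9.
Lemma allEP f : allE f = true -> forall x, f x = true.
Proof. move=> H x; rewrite /allE in H; repeat rewrite Bool.andb_true_iff in H; case: x; tauto. Qed.

Definition v4 (a b c d : E10) : nat -> E10 :=
  fun n => match n with 0 => a | 1 => b | 2 => c | _ => d end.

Lemma eval_v4 (op : E10 -> E10 -> E10) (i : 'I_6) v :
  eval op v (Mfam i).1 = eval op (v4 (v 0) (v 1) (v 2) (v 3)) (Mfam i).1 /\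
  eval op v (Mfam i).2 = eval op (v4 (v 0) (v 1) (v 2) (v 3)) (Mfam i).2.
Proof. by case: i => [[|[|[|[|[|[|//]]]]]] Hi]. Qed.

Definition chk (k : nat) (i : 'I_6) : bool :=
  allE (fun a => allE (fun b => allE (fun c => allE (fun d =>
    Nat.eqb (enc (eval (mop k) (v4 a b c d) (Mfam i).1)) (enc (eval (mop k) (v4 a b c d) (Mfam i).2)))))).

Lemma sat_chk k i : chk k i = true -> satisfies (mop k) (Mfam i).
Proof.
move=> h v. have [-> ->] := eval_v4 (mop k) i v.
apply: enc_inj. apply/PeanoNat.Nat.eqb_eq.
move: (v 0) (v 1) (v 2) (v 3) => a b c d.
move: h => /allEP /(_ a) /allEP /(_ b) /allEP /(_ c) /allEP /(_ d). by [].
Qed.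

Definition o6 (n : nat) (h : (n < 6)%N) : 'I_6 := Ordinal h.

Lemma indep_gen (i : 'I_6) k a b c d :
  (forall j : 'I_6, j != i -> chk k j = true) ->
  eval (mop k) (v4 a b c d) (Mfam i).1 <> eval (mop k) (v4 a b c d) (Mfam i).2 ->
  ~ consequence (Mset_but i) (Mfam i).
Proof.
move=> hc hne hder. apply: hne.
apply: (sound (op := mop k) (E := Mset_but i)) => //.
move=> e [j [hj ->]]. apply: sat_chk. exact: hc.
Qed.

Lemma indep (i : 'I_6) : ~ consequence (Mset_but i) (Mfam i).
Proof.
case: i => [[|[|[|[|[|[|//]]]]]] Hi].
- apply: (@indep_gen _ 0 e1 e2 e3 e4); last by vm_compute.
  by case=> [[|[|[|[|[|[|//]]]]]] ?] //= _; vm_compute.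
- apply: (@indep_gen _ 1 e1 e2 e3 e4); last by vm_compute.
  by case=> [[|[|[|[|[|[|//]]]]]] ?] //= _; vm_compute.
- apply: (@indep_gen _ 2 e3 e1 e3 e3); last by vm_compute.
  by case=> [[|[|[|[|[|[|//]]]]]] ?] //= _; vm_compute.
- apply: (@indep_gen _ 3 e1 e2 e3 e4); last by vm_compute.
  by case=> [[|[|[|[|[|[|//]]]]]] ?] //= _; vm_compute.
- apply: (@indep_gen _ 4 e2 e3 e4 e1); last by vm_compute.
  by case=> [[|[|[|[|[|[|//]]]]]] ?] //= _; vm_compute.
- apply: (@indep_gen _ 5 e2 e3 e3 e3); last by vm_compute.
  by case=> [[|[|[|[|[|[|//]]]]]] ?] //= _; vm_compute.
Qed.


Theorem theorem1p1 :
  basis_for Mset Sigma /\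
  (forall i : 'I_6, Sigma (Mfam i)) /\
  (forall i : 'I_6, ~ consequence (Mset_but i) (Mfam i)).
Proof.
split; [|split].
- move=> [s t]; split.
  + move=> h; exact: (der_Sigma h).
  + move=> h. rewrite /consequence /=. exact: (@complete (tsize s) s t (leqnn _) (Sigma_peq h)).
- move=> i G. exact: valid.
- exact: indep.
Qed.
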